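(* Let $f:\mathbb{R}\to\mathbb{R}$ satisfy $f(0)=0$ and $|f(u)-f(v)|\leq C|u-v|(e^{\lambda u^2}+e^{\lambda v^2})$ for all $u,v\in\mathbb{R}$, for some constants $C,\lambda>0$. Let $T>0$ and $u\in C([0,T];\exp L^2_0(\mathbb{R}^N))$. Then for every $2\leq p<\infty$, $f(u)\in C([0,T];L^p(\mathbb{R}^N))$.
   Context: The Orlicz space $\exp L^2(\mathbb{R}^N)$ is the set of $u\in L^1_{loc}(\mathbb{R}^N)$ such that $\int_{\mathbb{R}^N}(e^{|u(x)|^2/\alpha^2}-1)\,dx<\infty$ for some $\alpha>0$, with the Luxemburg norm $\|u\|_{\exp L^2}=\inf\{\alpha>0:\int_{\mathbb{R}^N}(e^{|u(x)|^2/\alpha^2}-1)\,dx\leq 1\}$. $\exp L^2_0(\mathbb{R}^N)$ is the closure of $C_0^\infty(\mathbb{R}^N)$ in this norm, equivalently the set of $u\in L^1_{loc}$ with $\int(e^{|u|^2/\alpha^2}-1)\,dx<\infty$ for every $\alpha>0$, equipped with the same norm. *)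

(* Defs.v *)
From HB Require Import structures.
From mathcomp Require Import all_boot all_order all_algebra.
From mathcomp Require Import all_classical all_reals all_analysis.
Set Implicit Arguments. Unset Strict Implicit. Unset Printing Implicit Defensive.
Import Order.TTheory GRing.Theory Num.Theory.
Import numFieldNormedType.Exports.
Local Open Scope classical_set_scope.
Local Open Scope ring_scope.

(* R^N is represented by N.-tuple R, with the library's product (Borel)
   sigma-algebra on tuples.  The Lebesgue integral over R^N of a
   nonnegative (extended-real valued) function is the iterated Lebesgue
   integral over R (equal to the integral w.r.t. N-dimensional Lebesgue
   measure for nonnegative measurable functions, by Tonelli). *)
Fixpoint iint (R : realType) (N : nat) : (N.-tuple R -> \bar R) -> \bar R :=
  match N with
  | 0 => fun g => g [tuple]
  | n.+1 => fun g =>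
      (\int[@lebesgue_measure R]_(x in [set: R]) iint (fun t : n.-tuple R => g (cons_tuple x t)))%E
  end.

Definition exp_integral (R : realType) (N : nat) (g : N.-tuple R -> R) (a : R) : \bar R :=
  iint (fun x => (expR (g x ^+ 2 / a ^+ 2) - 1)%:E).

Definition in_expL2_0 (R : realType) (N : nat) (g : N.-tuple R -> R) : Prop :=
  measurable_fun [set: N.-tuple R] g /\
  forall a : R, 0 < a -> (exp_integral g a < +oo)%E.

Definition expL2_norm (R : realType) (N : nat) (g : N.-tuple R -> R) : R :=
  inf [set a : R | 0 < a /\ (exp_integral g a <= 1)%E].

Definition Lp_integral (R : realType) (N : nat) (g : N.-tuple R -> R) (p : R) : \bar R :=
  iint (fun x => (`|g x| `^ p)%:E).

Definition in_Lp (R : realType) (N : nat) (g : N.-tuple R -> R) (p : R) : Prop :=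
  measurable_fun [set: N.-tuple R] g /\ (Lp_integral g p < +oo)%E.

Definition Lp_norm (R : realType) (N : nat) (g : N.-tuple R -> R) (p : R) : \bar R :=
  ((Lp_integral g p) `^ p^-1)%E.

(* Main.v *)
Require Import Defs.
From HB Require Import structures.
From mathcomp Require Import all_boot all_order all_algebra.
From mathcomp Require Import all_classical all_reals all_analysis.
From mathcomp Require Import measurable_realfun.
From mathcomp Require Import ring lra.
Import Order.TTheory GRing.Theory Num.Theory.
Import numFieldNormedType.Exports.
Local Open Scope classical_set_scope.
Local Open Scope ring_scope.

Section iint_theory.
Variable R : realType.
Local Open Scope ereal_scope.

Lemma iint_ge0 (n : nat) (g : n.-tuple R -> \bar R) :
  (forall t, 0 <= g t) -> 0 <= iint g.
Proof.
elim: n g => [|n IH] g g0 /=; first exact: g0.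
apply: integral_ge0 => x _; apply: IH => t; exact: g0.
Qed.

Lemma iint_meas (n : nat) d (X : measurableType d)
  (G : X * n.-tuple R -> \bar R) :
  measurable_fun setT G -> (forall z, 0 <= G z) ->
  measurable_fun setT (fun x => iint (fun t => G (x, t))).
Proof.
elim: n d X G => [|n IH] d X G mG G0 /=.
  apply: (measurableT_comp mG).
  exact: measurable_fun_pair.
pose H := fun z : (X * R) * n.-tuple R => G (z.1.1, cons_tuple z.1.2 z.2).
have mH : measurable_fun setT H.
  apply: (measurableT_comp mG).
  apply: measurable_fun_pair.
    by apply: measurableT_comp => //.
  have := @measurable_cons _ _ _ _ (fun z : (X * R) * n.-tuple R => z.1.2) n snd.
  move=> /(_ ltac:(by apply: measurableT_comp) measurable_snd).
  exact.
have := IH _ _ H mH (fun z => G0 _).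
move=> mK.
have h := (@measurable_fun_fubini_tonelli_F _ _ X (measurableTypeR R) R (@lebesgue_measure R)
  (fun xy => iint (fun s => H (xy, s))) mK (fun z => @iint_ge0 n _ (fun t => G0 _))).
exact h.
Qed.

Lemma mcons n (g : (n.+1).-tuple R -> \bar R) :
  measurable_fun setT g ->
  measurable_fun setT (fun z : (measurableTypeR R * n.-tuple R)%type => g (cons_tuple z.1 z.2)).
Proof.
move=> mg; apply: (measurableT_comp mg).
have := @measurable_cons _ _ _ _ (fun z : (measurableTypeR R * n.-tuple R)%type => z.1) n snd.
move=> /(_ measurable_fst measurable_snd).
exact.
Qed.

Lemma meas_inner n (g : (n.+1).-tuple R -> \bar R) :
  measurable_fun setT g -> (forall t, 0 <= g t) ->
  measurable_fun setT (fun x : measurableTypeR R => iint (fun t => g (cons_tuple x t))).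
Proof.
move=> mg g0.
have h := (@iint_meas n _ (measurableTypeR R) (fun z => g (cons_tuple z.1 z.2)) (@mcons n g mg) (fun z => g0 _)).
exact h.
Qed.

Lemma iint_le n (g1 g2 : n.-tuple R -> \bar R) :
  measurable_fun setT g1 -> measurable_fun setT g2 ->
  (forall t, 0 <= g1 t) -> (forall t, g1 t <= g2 t) -> iint g1 <= iint g2.
Proof.
elim: n g1 g2 => [|n IH] g1 g2 m1 m2 g10 g12 /=; first exact: g12.
apply: ge0_le_integral => //.
- move=> x _; apply: iint_ge0 => t; exact: g10.
- exact: meas_inner.
- apply: meas_inner => // t; exact: le_trans (g10 t) (g12 t).
- move=> x _; apply: IH.
  + exact: (measurableT_comp m1 (@measurable_cons _ _ _ _ (fun _ : n.-tuple R => x) n idfun (measurable_cst _) (@measurable_id _ _ _))).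
  + exact: (measurableT_comp m2 (@measurable_cons _ _ _ _ (fun _ : n.-tuple R => x) n idfun (measurable_cst _) (@measurable_id _ _ _))).
  + by move=> t; exact: g10.
  + by move=> t; exact: g12.
Qed.

Lemma mfix n (g : (n.+1).-tuple R -> \bar R) (x : R) :
  measurable_fun setT g -> measurable_fun setT (fun t : n.-tuple R => g (cons_tuple x t)).
Proof.
move=> m1.
exact: (measurableT_comp m1 (@measurable_cons _ _ _ _ (fun _ : n.-tuple R => x) n idfun (measurable_cst _) (@measurable_id _ _ _))).
Qed.

Lemma iintD n (g1 g2 : n.-tuple R -> \bar R) :
  measurable_fun setT g1 -> measurable_fun setT g2 ->
  (forall t, 0 <= g1 t) -> (forall t, 0 <= g2 t) ->
  iint (fun t => g1 t + g2 t) = iint g1 + iint g2.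
Proof.
elim: n g1 g2 => [|n IH] g1 g2 m1 m2 g10 g20 //=.
rewrite -ge0_integralD //.
- apply: eq_integral => x _; apply: IH => //; exact: mfix.
- by move=> x _; apply: iint_ge0.
- exact: meas_inner.
- by move=> x _; apply: iint_ge0.
- exact: meas_inner.
Qed.

Lemma iintZ n (k : \bar R) (g : n.-tuple R -> \bar R) :
  0 <= k -> measurable_fun setT g -> (forall t, 0 <= g t) ->
  iint (fun t => k * g t) = k * iint g.
Proof.
elim: n g => [|n IH] g k0 m1 g10 //=.
rewrite -ge0_integralZl //.
- apply: eq_integral => x _; apply: IH => //; exact: mfix.
- exact: meas_inner.
- by move=> x _; apply: iint_ge0.
Qed.
End iint_theory.

Section real_lemmas.
Variable R : realType.

Lemma expR_sub1_ge0 (y : R) : 0 <= y -> 0 <= expR y - 1.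
Proof. move=> y0; have := expR_ge1Dx y; lra. Qed.

Lemma pow_exp_bound (q : R) : 2 <= q ->
  exists2 K : R, 0 < K & forall x : R, `|x| `^ q <= K * (expR (x ^+ 2) - 1).
Proof.
move=> q2.
set k := (Num.Def.truncn q).+1.
have qk : q <= (k.*2)%:R.
  have := truncnS_gt q; rewrite -/k => h.
  rewrite -addnn natrD; have : (0:R) <= k%:R by [].
  lra.
exists (k`!)%:R; first by rewrite ltr0n fact_gt0.
have K1 : (1:R) <= (k`!)%:R by rewrite ler1n fact_gt0.
move=> x.
have e0 := @expR_sub1_ge0 _ (sqr_ge0 x).
have [->|x0] := eqVneq x 0.
  rewrite normr0 powR0; last by apply/eqP => q0; move: q2; rewrite q0; lra.
  by rewrite mulr_ge0.
have [x1|x1] := lerP `|x| 1.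
  have h1 : `|x| `^ q <= `|x| `^ 2.
    apply: ger_powR => //; rewrite normr_gt0 x0 /=; exact: x1.
  have h2 : `|x| `^ 2 = x ^+ 2 by rewrite (powR_mulrn 2) // real_normK // num_real.
  have h3 := expR_ge1Dx (x ^+ 2).
  rewrite h2 in h1.
  apply: (le_trans h1).
  apply: (le_trans (y := expR (x ^+ 2) - 1)); first lra.
  by rewrite ler_peMl.
have h1 : `|x| `^ q <= `|x| `^ (k.*2)%:R by apply: ler_powR => //; exact: ltW.
apply: (le_trans h1).
rewrite powR_mulrn // -addnn exprD -exprMn_comm; last exact: mulrC.
rewrite -normrM -expr2 ger0_norm ?sqr_ge0 //.
have := @expR_ge1Dxn R (x ^+ 2) (Num.Def.truncn q) (sqr_ge0 x).
rewrite -/k => h.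
have kf : (0:R) < (k`!)%:R by rewrite ltr0n fact_gt0.
have : x ^+ 2 ^+ k / (k`!)%:R <= expR (x ^+ 2) - 1 by lra.
rewrite ler_pdivrMr // => h'.
by rewrite mulrC.
Qed.

Lemma max3_powR (u v r p : R) : 0 <= u -> 0 <= v -> 0 <= r -> 0 <= p ->
  (u + v + r) `^ p <= 3 `^ p * (u `^ p + v `^ p + r `^ p).
Proof.
move=> u0 v0 r0 p0.
set m := Num.max u (Num.max v r).
have m0 : 0 <= m by rewrite le_max u0.
have hs : u + v + r <= 3 * m.
  have h1 : u <= m by rewrite /m le_max lexx.
  have h2 : v <= m by rewrite /m !le_max lexx orbT.
  have h3 : r <= m by rewrite /m !le_max lexx !orbT.
  lra.
have h1 : (u + v + r) `^ p <= (3 * m) `^ p.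
  by apply: ge0_ler_powR => //; rewrite nnegrE; [lra | lra].
apply: (le_trans h1); rewrite powRM //; apply: ler_wpM2l; first exact: powR_ge0.
have hu := powR_ge0 u p; have hv := powR_ge0 v p; have hr := powR_ge0 r p.
have : m = u \/ m = v \/ m = r.
  rewrite /m /Num.max; case: ifP => _; last by left.
  by case: ifP => _; right; [right|left].
by case=> [->|[->|->]]; lra.
Qed.

Lemma E_bound (t p : R) : 0 <= t -> 1 <= p ->
  ((expR t - 1) `^ p) ^+ 2 <= 2 * (expR (2 * p * t) - 1).
Proof.
move=> t0 p1.
have E0 := @expR_sub1_ge0 _ t0.
have tt : t <= 2 * p * t by nra.
have et : expR t <= expR (2 * p * t) by rewrite ler_expR.
have P0 := powR_ge0 (expR t - 1) p.
have [E1|E1] := lerP (expR t - 1) 1.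
  have hE : (expR t - 1) `^ p <= expR t - 1.
    have [->|Enz] := eqVneq (expR t - 1) 0.
      by rewrite powR0 //; apply/eqP => p0; move: p1; rewrite p0; lra.
    by apply: ge1r_powR => //; rewrite E1 andbT lt_neqAle eq_sym Enz E0.
  have : ((expR t - 1) `^ p) ^+ 2 <= (expR t - 1) `^ p.
    rewrite expr2 ler_piMl //; lra.
  lra.
have h1 : (expR t - 1) `^ p <= (expR t) `^ p.
  by apply: ge0_ler_powR; rewrite ?nnegrE; [lra|lra|exact: expR_ge0|lra].
have h2 : (expR t) `^ p ^+ 2 = expR (2 * p * t).
  by rewrite -expRM expr2 -expRD; congr expR; ring.
have : ((expR t - 1) `^ p) ^+ 2 <= (expR t) `^ p ^+ 2.
  by rewrite ler_pXn2r // nnegrE ?powR_ge0.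
lra.
Qed.

Lemma amgm_exp (A B : R) : expR (A + B) <= (expR (2 * A) + expR (2 * B)) / 2.
Proof.
have -> : 2 * A = A + A by ring.
have -> : 2 * B = B + B by ring.
rewrite !expRD.
have := sqr_ge0 (expR A - expR B).
rewrite expr2 => h.
set a := expR A in h *; set b := expR B in h *.
have : a * b <= (a * a + b * b) / 2.
  rewrite ler_pdivlMr //; lra.
done.
Qed.

Lemma brk_lemma (Z A B P K1 K2 pha phb : R) :
 Z * A <= Z ^+ 2 + A ^+ 2 -> Z * B <= Z ^+ 2 + B ^+ 2 ->
 P * Z <= P * (K1 * pha) -> Z ^+ 2 <= K2 * pha -> A ^+ 2 <= phb + pha -> B ^+ 2 <= 2 * phb ->
 Z * (A + B + P) <= (2 * K2 + P * K1 + 1) * pha + 3 * phb.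
Proof. move=> *. lra. Qed.

Lemma eqle (x y : R) : x = y -> x <= y.
Proof. by move=> ->. Qed.

Lemma sq_le (x y : R) : x ^+ 2 <= 2 * y ^+ 2 + 2 * (x - y) ^+ 2.
Proof.
have h : 2 * y ^+ 2 + 2 * (x - y) ^+ 2 - x ^+ 2 = (2 * y - x) ^+ 2 by ring.
have := sqr_ge0 (2 * y - x); rewrite -h; lra.
Qed.

Lemma pw (f : R -> R) (C lam p K1 K2 b : R) :
  (forall u v : R,
     `|f u - f v| <= C * `|u - v| * (expR (lam * u ^+ 2) + expR (lam * v ^+ 2))) ->
  0 < C -> 0 < lam -> 2 <= p -> 0 <= K1 -> 0 <= K2 ->
  (forall x : R, `|x| `^ p <= K1 * (expR (x ^+ 2) - 1)) ->
  (forall x : R, `|x| `^ (p * 2) <= K2 * (expR (x ^+ 2) - 1)) ->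
  0 < b -> (b ^+ 2)^-1 = 8 * p * lam ->
  forall x y a : R, 0 < a -> a <= b ->
  `|f x - f y| `^ p <= (3 * C) `^ p * a `^ p *
     ((2 * K2 + 2 `^ p * K1 + 1) * (expR ((x - y) ^+ 2 / a ^+ 2) - 1)
      + 3 * (expR (y ^+ 2 / b ^+ 2) - 1)).
Proof.
move=> hf C0 l0 p2 K10 K20 hK1 hK2 b0 hb x y a a0 ab.
have p1 : 1 <= p by lra.
have p0 : 0 <= p by lra.
set w := x - y.
set Ex := expR (lam * x ^+ 2) - 1.
set Ey := expR (lam * y ^+ 2) - 1.
have Ex0 : 0 <= Ex by apply: expR_sub1_ge0; apply: mulr_ge0; [exact: ltW|exact: sqr_ge0].
have Ey0 : 0 <= Ey by apply: expR_sub1_ge0; apply: mulr_ge0; [exact: ltW|exact: sqr_ge0].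
set Z := `|w / a| `^ p.
set pha := expR (w ^+ 2 / a ^+ 2) - 1.
set phb := expR (y ^+ 2 / b ^+ 2) - 1.
have pha0 : 0 <= pha by apply: expR_sub1_ge0; apply: divr_ge0; exact: sqr_ge0.
have phb0 : 0 <= phb by apply: expR_sub1_ge0; apply: divr_ge0; exact: sqr_ge0.
have Z0 : 0 <= Z by exact: powR_ge0.
have s1 : `|f x - f y| <= C * `|w| * (Ex + Ey + 2).
  have := hf x y; rewrite -/w; congr (_ <= _); rewrite /Ex /Ey; ring.
have s2 : `|f x - f y| `^ p <= (C * `|w| * (Ex + Ey + 2)) `^ p.
  by apply: ge0_ler_powR => //; rewrite nnegrE //; apply: le_trans s1.
have s3 : (C * `|w| * (Ex + Ey + 2)) `^ p = C `^ p * (`|w| `^ p * (Ex + Ey + 2) `^ p).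
  rewrite powRM; [|exact: mulr_ge0 (ltW C0) (normr_ge0 _)|exact: addr_ge0 (addr_ge0 Ex0 Ey0) (ler0n _ 2)].
  by rewrite powRM; [rewrite mulrA|exact: ltW|exact: normr_ge0].
have s4 := @max3_powR Ex Ey 2 p Ex0 Ey0 (ler0n R 2) p0.
have s5 : `|w| `^ p = a `^ p * Z.
  rewrite /Z -powRM; [|exact: ltW|by []]; congr (_ `^ _).
  by rewrite normrM normfV (gtr0_norm a0) mulrCA divff ?mulr1 // gt_eqF.
have s6 : (3 * C) `^ p = 3 `^ p * C `^ p by rewrite powRM //; exact: ltW.
have hZ1 : Z <= K1 * pha.
  by have := hK1 (w / a); rewrite expr_div_n.
have hZ2 : Z ^+ 2 <= K2 * pha.
  have := hK2 (w / a); rewrite expr_div_n powRrM (powR_mulrn 2) //; exact: powR_ge0.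
have hEx : (Ex `^ p) ^+ 2 <= phb + pha.
  have h := @E_bound (lam * x ^+ 2) p (mulr_ge0 (ltW l0) (sqr_ge0 x)) p1.
  apply: (le_trans h).
  have hxx : x ^+ 2 <= 2 * y ^+ 2 + 2 * w ^+ 2 by exact: sq_le.
  have hy : y ^+ 2 / b ^+ 2 = 2 * (4 * p * lam * y ^+ 2).
    by rewrite hb; ring.
  have hwb : w ^+ 2 / b ^+ 2 = 2 * (4 * p * lam * w ^+ 2).
    by rewrite hb; ring.
  have hwa : w ^+ 2 / b ^+ 2 <= w ^+ 2 / a ^+ 2.
    apply: ler_wpM2l; first exact: sqr_ge0.
    rewrite lef_pV2 ?posrE ?exprn_gt0 //.
    by rewrite ler_pXn2r // nnegrE; exact: ltW.
  have e1 : expR (2 * p * (lam * x ^+ 2)) <= expR (4 * p * lam * y ^+ 2 + 4 * p * lam * w ^+ 2).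
    rewrite ler_expR.
    have hpl : 0 <= 2 * p * lam by apply: mulr_ge0; [exact: mulr_ge0|exact: ltW].
    have := ler_wpM2l hpl hxx.
    move=> h2; apply: (le_trans (y := 2 * p * lam * (2 * y ^+ 2 + 2 * w ^+ 2))); last by apply: eqle; ring.
    by apply: (le_trans _ h2); apply: eqle; ring.
  have e2 := amgm_exp (4 * p * lam * y ^+ 2) (4 * p * lam * w ^+ 2).
  rewrite -hy -hwb in e2.
  have e3 : expR (w ^+ 2 / b ^+ 2) <= expR (w ^+ 2 / a ^+ 2) by rewrite ler_expR.
  rewrite /phb /pha; clear - e1 e2 e3; lra.
have hEy : (Ey `^ p) ^+ 2 <= 2 * phb.
  have h := @E_bound (lam * y ^+ 2) p (mulr_ge0 (ltW l0) (sqr_ge0 y)) p1.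
  apply: (le_trans h).
  have hy : y ^+ 2 / b ^+ 2 = 2 * (4 * p * lam * y ^+ 2) by rewrite hb; ring.
  have : expR (2 * p * (lam * y ^+ 2)) <= expR (y ^+ 2 / b ^+ 2).
    rewrite ler_expR hy.
    have h3 : 0 <= p * lam * y ^+ 2 by apply: mulr_ge0; [apply: mulr_ge0; [exact: p0|exact: ltW]|exact: sqr_ge0].
    apply: (le_trans (y := 2 * (p * lam * y ^+ 2))); first by apply: eqle; ring.
    apply: (le_trans (y := 8 * (p * lam * y ^+ 2))); first by clear - h3; lra.
    by apply: eqle; ring.
  rewrite /phb; move=> hh; clear - hh; lra.
have PEx := powR_ge0 Ex p; have PEy := powR_ge0 Ey p.
have P2 := powR_ge0 2 p.
have hb1 : Z * Ex `^ p <= Z ^+ 2 + (Ex `^ p) ^+ 2.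
  have := sqr_ge0 (Z - Ex `^ p); have := mulr_ge0 Z0 PEx; rewrite !expr2; move=> h1 h2; clear - h1 h2; lra.
have hb2 : Z * Ey `^ p <= Z ^+ 2 + (Ey `^ p) ^+ 2.
  have := sqr_ge0 (Z - Ey `^ p); have := mulr_ge0 Z0 PEy; rewrite !expr2; move=> h1 h2; clear - h1 h2; lra.
have hb3 : 2 `^ p * Z <= 2 `^ p * (K1 * pha) by apply: ler_wpM2l.
have brk : Z * (Ex `^ p + Ey `^ p + 2 `^ p) <=
   (2 * K2 + 2 `^ p * K1 + 1) * pha + 3 * phb.
  exact: brk_lemma hb1 hb2 hb3 hZ2 hEx hEy.
apply: (le_trans s2); rewrite s3 s5 s6.
have Cp := powR_ge0 C p; have ap := powR_ge0 a p; have tp := powR_ge0 3 p.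
have S0 : 0 <= Ex `^ p + Ey `^ p + 2 `^ p by exact: addr_ge0 (addr_ge0 PEx PEy) P2.
have hA : (Ex + Ey + 2) `^ p * Z <= 3 `^ p * (Ex `^ p + Ey `^ p + 2 `^ p) * Z.
  by apply: ler_wpM2r.
have hB : 3 `^ p * (Ex `^ p + Ey `^ p + 2 `^ p) * Z <= 3 `^ p * ((2 * K2 + 2 `^ p * K1 + 1) * pha + 3 * phb).
  by rewrite -mulrA; apply: ler_wpM2l => //; rewrite mulrC.
have -> : C `^ p * (a `^ p * Z * (Ex + Ey + 2) `^ p) = (C `^ p * a `^ p) * ((Ex + Ey + 2) `^ p * Z) by ring.
have -> : 3 `^ p * C `^ p * a `^ p * ((2 * K2 + 2 `^ p * K1 + 1) * pha + 3 * phb) =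
   (C `^ p * a `^ p) * (3 `^ p * ((2 * K2 + 2 `^ p * K1 + 1) * pha + 3 * phb)) by ring.
apply: ler_wpM2l; first exact: mulr_ge0.
exact: le_trans hA hB.
Qed.

Lemma ph_mono (z a0 a : R) : 0 < a0 -> a0 <= a ->
  expR (z ^+ 2 / a ^+ 2) - 1 <= expR (z ^+ 2 / a0 ^+ 2) - 1.
Proof.
move=> a00 aa.
have a0' : 0 < a by exact: lt_le_trans aa.
rewrite lerD2r ler_expR; apply: ler_wpM2l; first exact: sqr_ge0.
rewrite lef_pV2 ?posrE ?exprn_gt0 //.
by rewrite ler_pXn2r // nnegrE ltW.
Qed.

Lemma diff_bound (x y : R) :
  expR ((x - y) ^+ 2 / 1 ^+ 2) - 1 <=
  2^-1 * (expR (x ^+ 2 / (2^-1) ^+ 2) - 1) + 2^-1 * (expR (y ^+ 2 / (2^-1) ^+ 2) - 1).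
Proof.
have h1 : (x - y) ^+ 2 / 1 ^+ 2 <= 2 * x ^+ 2 + 2 * y ^+ 2.
  rewrite expr1n divr1.
  have := sqr_ge0 (x + y).
  have -> : (x - y) ^+ 2 = 2 * x ^+ 2 + 2 * y ^+ 2 - (x + y) ^+ 2 by ring.
  lra.
have e1 : expR ((x - y) ^+ 2 / 1 ^+ 2) <= expR (2 * x ^+ 2 + 2 * y ^+ 2) by rewrite ler_expR.
have e2 := amgm_exp (2 * x ^+ 2) (2 * y ^+ 2).
have hx : x ^+ 2 / (2^-1) ^+ 2 = 2 * (2 * x ^+ 2) by rewrite exprVn invrK; ring.
have hy : y ^+ 2 / (2^-1) ^+ 2 = 2 * (2 * y ^+ 2) by rewrite exprVn invrK; ring.
rewrite hx hy.
lra.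
Qed.

Lemma bern (h : R) (n : nat) : 0 <= h -> 1 + n%:R * h <= (1 + h) ^+ n.
Proof.
move=> h0; elim: n => [|n IH]; first by rewrite mul0r addr0 expr0.
rewrite exprS -natr1.
have : 0 <= n%:R * h * h by apply: mulr_ge0 => //; apply: mulr_ge0.
have : (1 + h) * (1 + n%:R * h) <= (1 + h) * (1 + h) ^+ n.
  by apply: ler_wpM2l => //; lra.
lra.
Qed.

Lemma scale_bound (n : nat) (z : R) : (0 < n)%N ->
  expR (z ^+ 2 / (Num.sqrt n%:R) ^+ 2) - 1 <= n%:R^-1 * (expR (z ^+ 2 / 1 ^+ 2) - 1).
Proof.
move=> n0.
have n0' : (0:R) < n%:R by rewrite ltr0n.
rewrite sqr_sqrtr ?ler0n // expr1n divr1.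
set t := z ^+ 2 / n%:R.
have ht : z ^+ 2 = n%:R * t by rewrite /t mulrC divfK // gt_eqF.
rewrite ht.
have h0 : 0 <= expR t - 1 by apply: expR_sub1_ge0; rewrite /t divr_ge0 ?sqr_ge0 ?ler0n.
have := @bern (expR t - 1) n h0.
have -> : 1 + (expR t - 1) = expR t by ring.
rewrite -(powR_mulrn n (expR_ge0 t)) -expRM => h.
have h' : n%:R * (expR t - 1) <= expR (n%:R * t) - 1.
  move: h; rewrite (mulrC t); move=> h; lra.
rewrite -(ler_pM2l n0') mulrA mulfV ?gt_eqF // mul1r.
exact: h'.
Qed.
End real_lemmas.

Lemma f_cont (R : realType) (f : R -> R) (C lam : R) : 0 < C -> 0 < lam ->
  (forall a b : R,
     `|f a - f b| <= C * `|a - b| * (expR (lam * a ^+ 2) + expR (lam * b ^+ 2))) ->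
  continuous f.
Proof.
move=> C0 l0 hf x.
apply/cvgrPdist_lt => e e0.
set L := C * (expR (lam * (`|x| + 1) ^+ 2) + expR (lam * x ^+ 2)) + 1.
have L0 : 0 < L.
  rewrite /L; have := expR_gt0 (lam * (`|x| + 1) ^+ 2); have := expR_gt0 (lam * x ^+ 2).
  move=> h1 h2; have : 0 <= C * (expR (lam * (`|x| + 1) ^+ 2) + expR (lam * x ^+ 2)).
    apply: mulr_ge0; lra.
  lra.
apply/nbhs_ballP; exists (Num.min 1 (e / L)).
  by rewrite /= lt_min ltr01 divr_gt0.
move=> y; rewrite /ball /= lt_min => /andP [h1 h2].
have hxy : `|y| <= `|x| + 1.
  have := ler_normB x (x - y).
  have -> : x - (x - y) = y by ring.
  move=> h; apply: (le_trans h); rewrite lerD2l; exact: ltW.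
have ey : expR (lam * y ^+ 2) <= expR (lam * (`|x| + 1) ^+ 2).
  rewrite ler_expR; apply: ler_wpM2l; first exact: ltW.
  rewrite -real_normK ?num_real //; rewrite ler_pXn2r ?nnegrE ?addr_ge0 //.
have h3 := hf x y.
have h4 : `|x - y| * L < e.
  by rewrite -ltr_pdivlMr.
have h5 : C * `|x - y| * (expR (lam * x ^+ 2) + expR (lam * y ^+ 2)) <= `|x - y| * (L - 1).
  rewrite /L addrK.
  have -> : C * `|x - y| * (expR (lam * x ^+ 2) + expR (lam * y ^+ 2)) = `|x - y| * (C * (expR (lam * x ^+ 2) + expR (lam * y ^+ 2))) by ring.
  apply: ler_wpM2l => //.
  apply: ler_wpM2l; first exact: ltW.
  rewrite addrC; exact: lerD.
have h6 := normr_ge0 (x - y).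
clear - h3 h4 h5 h6; nra.
Qed.


Section lebesgue_part.
Variable R : realType.
Local Open Scope ereal_scope.

Lemma meas_ph N (g : N.-tuple R -> R) (a : R) : measurable_fun setT g ->
  measurable_fun setT (fun x => (expR (g x ^+ 2 / a ^+ 2) - 1)%:E).
Proof.
move=> mg; apply/measurable_EFinP; apply: measurable_funB => //.
apply: measurableT_comp; first exact: measurable_expR.
apply: measurable_funM => //.
exact: measurable_funX.
Qed.

Lemma ph_ge0 (z a : R) : 0 <= (expR (z ^+ 2 / a ^+ 2) - 1)%:E.
Proof. by rewrite lee_fin; apply: expR_sub1_ge0; apply: divr_ge0; exact: sqr_ge0. Qed.

Lemma iint_cst0 N : iint (fun _ : N.-tuple R => 0) = 0.
Proof.
elim: N => [|n IH] //=.
under eq_integral do rewrite IH.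
exact: integral0.
Qed.


Lemma est N (f : R -> R) (C lam p K1 K2 b : R) (g1 g2 : N.-tuple R -> R) :
  (forall u v : R,
     `|f u - f v| <= C * `|u - v| * (expR (lam * u ^+ 2) + expR (lam * v ^+ 2)))%R ->
  (0 < C)%R -> (0 < lam)%R -> (2 <= p)%R -> (0 <= K1)%R -> (0 <= K2)%R ->
  (forall x : R, `|x| `^ p <= K1 * (expR (x ^+ 2) - 1))%R ->
  (forall x : R, `|x| `^ (p * 2) <= K2 * (expR (x ^+ 2) - 1))%R ->
  (0 < b)%R -> ((b ^+ 2)^-1 = 8 * p * lam)%R ->
  measurable_fun setT g1 -> measurable_fun setT g2 ->
  forall a : R, (0 < a)%R -> (a <= b)%R ->
  Lp_integral (fun x => f (g1 x) - f (g2 x))%R p <=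
   ((3 * C) `^ p * a `^ p * (2 * K2 + 2 `^ p * K1 + 1))%:E * exp_integral (fun x => g1 x - g2 x)%R a
   + ((3 * C) `^ p * a `^ p * 3)%:E * exp_integral g2 b.
Proof.
move=> hf C0 l0 p2 K10 K20 hK1 hK2 b0 hb mg1 mg2 a a0 ab.
have mf : measurable_fun setT f by apply: continuous_measurable_fun; exact: (@f_cont R f C lam C0 l0 hf).
set c1 := ((3 * C) `^ p * a `^ p * (2 * K2 + 2 `^ p * K1 + 1))%R.
set c2 := ((3 * C) `^ p * a `^ p * 3)%R.
have c10 : (0 <= c1)%R.
  apply: mulr_ge0; first by apply: mulr_ge0; exact: powR_ge0.
  have : (0 <= 2 `^ p * K1)%R by apply: mulr_ge0 => //; exact: powR_ge0.
  move=> h1; clear - K20 h1; lra.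
have c20 : (0 <= c2)%R.
  apply: mulr_ge0; first by apply: mulr_ge0; exact: powR_ge0.
  by [].
have m1 : measurable_fun setT (fun x => (expR ((g1 x - g2 x) ^+ 2 / a ^+ 2) - 1)%:E).
  exact: (@meas_ph N (fun x => (g1 x - g2 x)%R) a (measurable_funB mg1 mg2)).
have m2 : measurable_fun setT (fun x => (expR (g2 x ^+ 2 / b ^+ 2) - 1)%:E).
  exact: meas_ph.
rewrite /exp_integral -(@iintZ R N c1%:E) //; last by move=> ?; exact: ph_ge0.
rewrite -(@iintZ R N c2%:E) //; last by move=> ?; exact: ph_ge0.
rewrite -iintD; last first.
- by move=> t; apply: mule_ge0 => //; exact: ph_ge0.
- by move=> t; apply: mule_ge0 => //; exact: ph_ge0.
- exact: emeasurable_funM.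
- exact: emeasurable_funM.
apply: iint_le.
- apply/measurable_EFinP; apply: (measurableT_comp (measurable_powR p)).
  have hB : measurable_fun setT (fun x => (f (g1 x) - f (g2 x))%R) by apply: measurable_funB; apply: measurableT_comp.
  exact: (measurableT_comp (@normr_measurable R setT) hB).
- apply: emeasurable_funD; exact: emeasurable_funM.
- by move=> t; rewrite lee_fin; exact: powR_ge0.
- move=> t; rewrite -!EFinM -EFinD lee_fin.
  have := @pw R f C lam p K1 K2 b hf C0 l0 p2 K10 K20 hK1 hK2 b0 hb (g1 t) (g2 t) a a0 ab.
  move=> h; apply: (le_trans h); apply: eqle; rewrite /c1 /c2; ring.
Qed.

Lemma exp_nonempty N (g1 g2 : N.-tuple R -> R) : in_expL2_0 g1 -> in_expL2_0 g2 ->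
  exists a : R, (0 < a)%R /\ exp_integral (fun x => g1 x - g2 x)%R a <= 1.
Proof.
move=> [mg1 h1] [mg2 h2].
have hh : (0 < 2^-1 :> R)%R by rewrite invr_gt0.
have mw : measurable_fun setT (fun x => (g1 x - g2 x)%R) by exact: measurable_funB.
have E1 : exp_integral (fun x => g1 x - g2 x)%R 1 <=
   (2^-1)%:E * exp_integral g1 2^-1 + (2^-1)%:E * exp_integral g2 2^-1.
  rewrite /exp_integral -(@iintZ R N (2^-1)%:E) //; last 2 first.
  - exact: meas_ph.
  - by move=> ?; exact: ph_ge0.
  rewrite -(@iintZ R N (2^-1)%:E) //; last 2 first.
  - exact: meas_ph.
  - by move=> ?; exact: ph_ge0.
  rewrite -iintD; last first.
  - by move=> t; apply: mule_ge0 => //; exact: ph_ge0.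
  - by move=> t; apply: mule_ge0 => //; exact: ph_ge0.
  - by apply: emeasurable_funM => //; exact: meas_ph.
  - by apply: emeasurable_funM => //; exact: meas_ph.
  apply: iint_le.
  - exact: (@meas_ph N (fun x => (g1 x - g2 x)%R) 1 mw).
  - by apply: emeasurable_funD; apply: emeasurable_funM => //; exact: meas_ph.
  - by move=> ?; exact: ph_ge0.
  - move=> t; rewrite -!EFinM -EFinD lee_fin; exact: diff_bound.
have E10 : 0 <= exp_integral (fun x => g1 x - g2 x)%R 1.
  by apply: iint_ge0 => t; exact: ph_ge0.
have F1 := h1 _ hh; have F2 := h2 _ hh.
have F10 : 0 <= exp_integral g1 2^-1 by apply: iint_ge0 => t; exact: ph_ge0.
have F20 : 0 <= exp_integral g2 2^-1 by apply: iint_ge0 => t; exact: ph_ge0.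
have Efin : exp_integral (fun x => g1 x - g2 x)%R 1 \is a fin_num.
  rewrite ge0_fin_numE //; apply: (le_lt_trans E1).
  rewrite lte_add_pinfty // lte_mul_pinfty //.
set r := fine (exp_integral (fun x => g1 x - g2 x)%R 1).
have Er : exp_integral (fun x => g1 x - g2 x)%R 1 = r%:E by rewrite fineK.
have r0 : (0 <= r)%R by rewrite -lee_fin -Er.
set n := (Num.Def.truncn r).+1.
have n0 : (0 < n)%N by [].
have rn : (r <= n%:R)%R.
  have := truncnS_gt r; rewrite -/n => h; exact: ltW.
exists (Num.sqrt n%:R); split; first by rewrite sqrtr_gt0 ltr0n.
have n0' : (0 < n%:R :> R)%R by rewrite ltr0n.
pose q : R := ((n%:R)^-1)%R.
have q0 : (0 <= q)%R by rewrite /q invr_ge0 ltW.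
apply: (@le_trans _ _ (q%:E * exp_integral (fun x => g1 x - g2 x)%R 1)).
  have k0 : 0 <= q%:E by rewrite lee_fin.
  have mm := (@meas_ph N (fun x => (g1 x - g2 x)%R) 1 mw).
  have pp : forall t, 0 <= (expR ((g1 t - g2 t) ^+ 2 / 1 ^+ 2) - 1)%:E by move=> ?; exact: ph_ge0.
  rewrite /exp_integral -(@iintZ R N _ _ k0 mm pp).
  apply: iint_le.
  - exact: (@meas_ph N (fun x => (g1 x - g2 x)%R) _ mw).
  - apply: emeasurable_funM => //; exact: (@meas_ph N (fun x => (g1 x - g2 x)%R) 1 mw).
  - by move=> ?; exact: ph_ge0.
  - move=> t; rewrite -EFinM lee_fin; exact: scale_bound.
rewrite Er -EFinM lee_fin /q.
rewrite ler_pdivrMl //; by rewrite mulr1.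
Qed.

Lemma norm_lt (I : \bar R) (e p : R) : 0 <= I -> I < (e `^ p)%:E -> (0 < e)%R -> (0 < p)%R ->
  I `^ p^-1 < e%:E.
Proof.
move=> I0 Ie e0 p0.
have Ifin : I \is a fin_num by rewrite ge0_fin_numE // (lt_trans Ie) // ltry.
rewrite -(fineK Ifin) poweR_EFin lte_fin.
have r0 : (0 <= fine I)%R by rewrite -lee_fin fineK.
have re : (fine I < e `^ p)%R by rewrite -lte_fin fineK.
have ee : ((e `^ p) `^ p^-1 = e)%R.
  by rewrite -powRrM mulfV ?gt_eqF // powRr1 // ltW.
rewrite -[X in (_ < X)%R]ee.
apply: gt0_ltr_powR; rewrite ?invr_gt0 ?nnegrE //.
exact: powR_ge0.
Qed.
End lebesgue_part.

Theorem proposition2p6 (R : realType) (N : nat) (f : R -> R) (C lambda : R)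
  (T : R) (u : R -> N.-tuple R -> R) :
  f 0 = 0 ->
  0 < C -> 0 < lambda ->
  (forall a b : R,
     `|f a - f b| <= C * `|a - b| * (expR (lambda * a ^+ 2) + expR (lambda * b ^+ 2))) ->
  0 < T ->
  (* u in C([0,T]; exp L^2_0(R^N)) *)
  (forall t, 0 <= t <= T -> in_expL2_0 (u t)) ->
  (forall t, 0 <= t <= T -> forall e : R, 0 < e -> exists2 d : R, 0 < d &
     forall s, 0 <= s <= T -> `|s - t| < d ->
       expL2_norm (fun x => u s x - u t x) < e) ->
  (* f(u) in C([0,T]; L^p(R^N)) for every 2 <= p < oo *)
  forall p : R, 2 <= p ->
    (forall t, 0 <= t <= T -> in_Lp (fun x => f (u t x)) p) /\
    (forall t, 0 <= t <= T -> forall e : R, 0 < e -> exists2 d : R, 0 < d &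
       forall s, 0 <= s <= T -> `|s - t| < d ->
         (Lp_norm (fun x => (f (u s x) - f (u t x))%R) p < e%:E)%E).
Proof.
move=> f0 C0 l0 hf T0 hu hc p p2.
have mf : measurable_fun setT f.
  by apply: continuous_measurable_fun; exact: (@f_cont R f C lambda C0 l0 hf).
have [K1 K10 hK1] := @pow_exp_bound R p p2.
have p2' : 2 <= p * 2 by lra.
have [K2 K20 hK2] := @pow_exp_bound R (p * 2) p2'.
have pl0 : 0 < 8 * p * lambda.
  by apply: mulr_gt0 => //; apply: mulr_gt0 => //; lra.
set b := Num.sqrt ((8 * p * lambda)^-1).
have b0 : 0 < b by rewrite sqrtr_gt0 invr_gt0.
have hb : (b ^+ 2)^-1 = 8 * p * lambda.
  by rewrite sqr_sqrtr ?invrK // invr_ge0 ltW.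
set K := 2 * K2 + 2 `^ p * K1 + 1.
set M := (3 * C) `^ p.
have K0 : 0 <= K.
  have := mulr_ge0 (powR_ge0 2 p) (ltW K10); rewrite /K; clear - K20 => h; lra.
have M0 : 0 <= M by exact: powR_ge0.
have estS := fun g1 g2 mg1 mg2 a a0 ab =>
  @est R N f C lambda p K1 K2 b g1 g2 hf C0 l0 p2 (ltW K10) (ltW K20) hK1 hK2 b0 hb
    mg1 mg2 a a0 ab.
split.
- move=> t ht; have [mv Fv] := hu t ht.
  split; first exact: measurableT_comp mf mv.
  have e1 : (fun x => f (u t x)) = (fun x => f (u t x) - f ((fun _ => 0) x)).
    by apply: funext => x; rewrite f0 subr0.
  rewrite e1.
  apply: (le_lt_trans (estS (u t) (fun _ => 0) mv (measurable_cst _) b b0 (lexx b))).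
  have ez : (fun x : N.-tuple R => (u t x - 0)%R) = u t by apply: funext => x; rewrite subr0.
  have z1 : exp_integral (fun x : N.-tuple R => (u t x - 0)%R) b = exp_integral (u t) b by rewrite ez.
  have z2 : exp_integral (fun _ : N.-tuple R => 0) b = 0%E.
    rewrite /exp_integral.
    have -> : (fun x : N.-tuple R => (expR ((fun _ : N.-tuple R => 0) x ^+ 2 / b ^+ 2) - 1)%:E) = (fun _ => 0%E).
      by apply: funext => x; rewrite expr0n /= mul0r expR0 subrr.
    exact: iint_cst0.
  rewrite z1 z2 mule0 adde0.
  have Ef : exp_integral (u t) b \is a fin_num.
    by rewrite ge0_fin_numE ?Fv //; apply: iint_ge0 => x; exact: ph_ge0.
  by rewrite -(fineK Ef) -EFinM ltry.
- move=> t ht e e0.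
  have [mv Fv] := hu t ht.
  have Ef : exp_integral (u t) b \is a fin_num.
    by rewrite ge0_fin_numE ?Fv //; apply: iint_ge0 => x; exact: ph_ge0.
  set B := fine (exp_integral (u t) b).
  have EB : exp_integral (u t) b = B%:E by rewrite fineK.
  have B0 : 0 <= B by rewrite -lee_fin -EB; apply: iint_ge0 => x; exact: ph_ge0.
  set Q := M * (K + 3 * B) + 1.
  have Q1 : 0 <= M * (K + 3 * B) by apply: mulr_ge0 => //; clear - K0 B0; lra.
  have Q0 : 0 < Q by rewrite /Q; clear - Q1; lra.
  set ep := e `^ p.
  have ep0 : 0 < ep by exact: powR_gt0.
  set a := Num.min b (Num.min 1 (ep / (2 * Q))).
  have a0 : 0 < a by rewrite /a !lt_min b0 ltr01 /= divr_gt0 // mulr_gt0.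
  have ab : a <= b by rewrite /a ge_min lexx.
  have a1 : a <= 1 by rewrite /a !ge_min lexx orbT.
  have aq : a <= ep / (2 * Q) by rewrite /a !ge_min lexx !orbT.
  have [d d0 hd] := hc t ht a a0.
  exists d => // s hs hsd.
  have nrm := hd s hs hsd.
  have [ms Fs] := hu s hs.
  have [a2 [a20 Ea2]] := @exp_nonempty R N (u s) (u t) (hu s hs) (hu t ht).
  have [y [y0 Ey] ya] : exists2 y, [set a : R | 0 < a /\ (exp_integral (fun x => (u s x - u t x)%R) a <= 1)%E] y & y < a.
    apply: inf_lt => //; by exists a2.
  have mw : measurable_fun setT (fun x => u s x - u t x) by exact: measurable_funB.
  have Ewa : (exp_integral (fun x => (u s x - u t x)%R) a <= 1)%E.
    apply: le_trans Ey; apply: iint_le.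
    - exact: (@meas_ph R N (fun x => u s x - u t x) a mw).
    - exact: (@meas_ph R N (fun x => u s x - u t x) y mw).
    - by move=> x; exact: ph_ge0.
    - move=> x; rewrite lee_fin; apply: ph_mono => //; exact: ltW.
  rewrite /Lp_norm; apply: norm_lt => //; last by lra.
  - by apply: iint_ge0 => x; rewrite lee_fin; exact: powR_ge0.
  apply: (le_lt_trans (estS (u s) (u t) ms mv a a0 ab)).
  rewrite EB -/K -/M.
  have c10 : 0 <= M * a `^ p * K by apply: mulr_ge0 => //; apply: mulr_ge0 => //; exact: powR_ge0.
  apply: (@le_lt_trans _ _ ((M * a `^ p * K)%:E * 1 + (M * a `^ p * 3)%:E * B%:E)%E).
    have c10e : (0 <= (M * a `^ p * K)%:E)%E by rewrite lee_fin.
    apply: leeD2r; apply: lee_pmul => //.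
    by apply: iint_ge0 => x; exact: ph_ge0.
  rewrite mule1 -EFinM -EFinD lte_fin.
  have apa : a `^ p <= a.
    by apply: ge1r_powR; [rewrite a0 a1 | lra].
  have h1 : M * a `^ p * K + M * a `^ p * 3 * B = (M * (K + 3 * B)) * a `^ p by ring.
  rewrite h1.
  have h2 : (M * (K + 3 * B)) * a `^ p <= (M * (K + 3 * B)) * a by exact: ler_wpM2l.
  have h3 : (M * (K + 3 * B)) * a < Q * a by rewrite ltr_pM2r // /Q; lra.
  have h4 : Q * a <= Q * (ep / (2 * Q)) by apply: ler_wpM2l => //; exact: ltW.
  have h5 : Q * (ep / (2 * Q)) = ep / 2 by field; rewrite gt_eqF.
  rewrite -/ep; clear - h2 h3 h4 h5 ep0; lra.
Qed.
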